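(* Assume (A1), (A2) and (A3) below. Let $r\in\mathcal R_\epsilon$ and let $p$ be the fixed path returned by the planner. Then the point $(\bar x_r,1)$ is an asymptotically stable equilibrium point of the closed-loop PathFG+MPC system $$s_{k+1}=g\big(\tilde\xi_N^*(x_k,s_k)\big),\qquad x_{k+1}=f\big(x_k,\tilde\kappa(x_k,s_k)\big),$$ with region of attraction $(\mathcal D_x(r)\times[0,1])\cap\tilde\Gamma$.
   Context: System: $x_{k+1}=f(x_k,u_k)$, $x_k\in\mathbb R^{n_x}$, $u_k\in\mathbb R^{n_u}$, $k\in\mathbb N=\{0,1,2,\dots\}$, with constraint sets $\mathcal X=\{x:h_x(x)\le0\}$, $\mathcal U=\{u:h_u(u)\le0\}$, where $h_x:\mathbb R^{n_x}\to\mathbb R$, $h_u:\mathbb R^{n_u}\to\mathbb R$. (A1) $f$ is locally Lipschitz, $h_x,h_u$ are continuous, and there are a set $\mathcal R\subseteq\mathbb R^{n_r}$ and continuous maps $r\mapsto\bar x_r\in\mathcal X$, $r\mapsto\bar u_r\in\mathcal U$ on $\mathcal R$ with $\bar x_r=f(\bar x_r,\bar u_r)$ for all $r\in\mathcal R$. For a fixed $\epsilon>0$, $\mathcal R_\epsilon=\{r\in\mathcal R: h_x(\bar x_r)\le-\epsilon,\ h_u(\bar u_r)\le-\epsilon\}$. MPC: fix a horizon $N\in\mathbb N_{>0}$, a stage cost $\ell:\mathcal X\times\mathcal U\times\mathcal R_\epsilon\to\mathbb R_{\ge0}$, a terminal set $\mathcal T\subseteq\mathcal X\times\mathcal R$ and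 a terminal cost $V:\mathcal T\to\mathbb R_{\ge0}$. For $(x,r)$ the optimal control problem (OCP) is to minimize $V(\xi_N,r)+\sum_{i=0}^{N-1}\ell(\xi_i,\mu_i,r)$ over $\xi=(\xi_0,\dots,\xi_N)$, $\mu=(\mu_0,\dots,\mu_{N-1})$ subject to $\xi_0=x$, $\xi_{i+1}=f(\xi_i,\mu_i)$, $\xi_i\in\mathcal X$, $\mu_i\in\mathcal U$ for $i=0,\dots,N-1$, and $(\xi_N,r)\in\mathcal T$. The feasible set is $\Gamma=\{(x,r)\in\mathcal X\times\mathcal R_\epsilon:$ the OCP constraints admit a solution$\}$. For $(x,r)\in\Gamma$, $\zeta^*(x,r)=(\xi_0^*,\dots,\xi_N^*,\mu_0^*,\dots,\mu_{N-1}^* )$ denotes the minimizer (treated as a function), $\xi_N^*(x,r)$ its final state, $J(x,r)$ the optimal cost, and the MPC law is $\kappa(x,r)=\mu_0^*(x,r)$. (A2) (a) $\ell$ is uniformly continuous, $\ell(\bar x_r,\bar u_r,r)=0$, and there is a class-$\mathcal K_\infty$ function $\gamma$ with $\ell(x,u,r)\ge\gamma(\|x-\bar x_r\|)$ for all $(x,r)\in\Gamma$, $u\in\mathcal U$. (b) $V$ is uniformly continuous, $V(\bar x_r,r)=0$, $V\ge0$ on $\mathcal T$, and there is a terminal law $\kappa_T:\mathcal T\to\mathcal U$ with $V(f(x,\kappa_T(x,r)),r)-V(x,r)\le-\ell(x,\kappa_T(x,r),r)$ for all $(x,r)\in\mathcal T$. (c) For all $(x,r)\in\mathcal T$: $(f(x,\kappa_T(x,r)),r)\in\mathcal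 T$, $x\in\mathcal X$ and $\kappa_T(x,r)\in\mathcal U$. (d) $(\bar x_r,r)\in\operatorname{int}\mathcal T$ for all $r\in\mathcal R_\epsilon$. (e) $\zeta^*$ is Lipschitz continuous. Paths: for $x_0\in\mathbb R^{n_x}$ and $r\in\mathcal R_\epsilon$, a feasible path is $\mathcal P(x_0,r)=\{p(s):s\in[0,1]\}$ with $p:[0,1]\to\mathcal R_\epsilon$ continuous, $(x_0,p(0))\in\Gamma$ and $p(1)=r$. $\mathcal D=\{(x_0,r): r\in\mathcal R_\epsilon$, a feasible path $\mathcal P(x_0,r)$ exists$\}$ and $\mathcal D_x(r)=\{x_0:(x_0,r)\in\mathcal D\}$. (A3) Given $(x_0,r)\in\mathcal D$, the path planner returns a feasible path $\mathcal P(x_0,r)$. With the path $p$ fixed: $\tilde x_s=\bar x_{p(s)}$, $\tilde{\mathcal T}=\{(x,s):(x,p(s))\in\mathcal T\}$, $\tilde\Gamma=\{(x,s):(x,p(s))\in\Gamma\}$, $\tilde\xi_N^*(x,s)=\xi_N^*(x,p(s))$, $\tilde\kappa(x,s)=\kappa(x,p(s))$, and the Path Feasibility Governor map is $g(\xi)=\max\{s\in[0,1]:(\xi,s)\in\tilde{\mathcal T}\}$. Asymptotic stability with a given region of attraction means Lyapunov stability of the equilibrium together with convergence to it of every trajectory starting in that region. *)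

(* Defs.v *)
(* R : realType, vectors are row vectors 'rV[R]_n
   with the library norm (max norm; all norms on R^n are equivalent). *)
From HB Require Import structures.
From mathcomp Require Import all_boot all_order all_algebra.
From mathcomp Require Import all_classical all_reals all_analysis.
Set Implicit Arguments. Unset Strict Implicit. Unset Printing Implicit Defensive.
Import Order.TTheory GRing.Theory Num.Theory.
Import numFieldNormedType.Exports.
Local Open Scope ring_scope.
Local Open Scope classical_set_scope.

Definition Kinf {R : realType} (gamma : R -> R) : Prop :=
  gamma 0 = 0 /\
  {within [set t : R | 0 <= t], continuous gamma} /\
  (forall a b : R, 0 <= a -> a < b -> gamma a < gamma b) /\
  (forall M : R, exists t : R, 0 <= t /\ M <= gamma t).

Definition loc_lipschitz2 {R : realType} {n m k : nat}
  (f : 'rV[R]_n -> 'rV[R]_m -> 'rV[R]_k) : Prop :=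
  forall (x0 : 'rV[R]_n) (u0 : 'rV[R]_m), exists2 d : R, 0 < d &
    exists L : R, forall x1 x2 u1 u2,
      `|x1 - x0| < d -> `|u1 - u0| < d -> `|x2 - x0| < d -> `|u2 - u0| < d ->
      `|f x1 u1 - f x2 u2| <= L * (`|x1 - x2| + `|u1 - u2|).

Definition unif_cont3 {R : realType} {n m k : nat}
  (l : 'rV[R]_n -> 'rV[R]_m -> 'rV[R]_k -> R)
  (Dom : 'rV[R]_n -> 'rV[R]_m -> 'rV[R]_k -> Prop) : Prop :=
  forall e : R, 0 < e -> exists2 d : R, 0 < d &
    forall x1 u1 r1 x2 u2 r2, Dom x1 u1 r1 -> Dom x2 u2 r2 ->
      `|x1 - x2| < d -> `|u1 - u2| < d -> `|r1 - r2| < d ->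
      `|l x1 u1 r1 - l x2 u2 r2| < e.

Definition unif_cont2 {R : realType} {n k : nat}
  (V : 'rV[R]_n -> 'rV[R]_k -> R) (Dom : set ('rV[R]_n * 'rV[R]_k)) : Prop :=
  forall e : R, 0 < e -> exists2 d : R, 0 < d &
    forall x1 r1 x2 r2, Dom (x1, r1) -> Dom (x2, r2) ->
      `|x1 - x2| < d -> `|r1 - r2| < d -> `|V x1 r1 - V x2 r2| < e.

Definition Reps {R : realType} {nx nu nr : nat} (Rset : set 'rV[R]_nr)
  (xbar : 'rV[R]_nr -> 'rV[R]_nx) (ubar : 'rV[R]_nr -> 'rV[R]_nu)
  (hx : 'rV[R]_nx -> R) (hu : 'rV[R]_nu -> R) (eps : R) : set 'rV[R]_nr :=
  [set r | Rset r /\ hx (xbar r) <= - eps /\ hu (ubar r) <= - eps].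

(* constraints of the OCP for (x, r); xi and mu are indexed by nat,
   only the indices 0..N (resp. 0..N-1) matter *)
Definition ocp_feasible {R : realType} {nx nu nr : nat}
  (f : 'rV[R]_nx -> 'rV[R]_nu -> 'rV[R]_nx)
  (hx : 'rV[R]_nx -> R) (hu : 'rV[R]_nu -> R)
  (T : set ('rV[R]_nx * 'rV[R]_nr)) (N : nat)
  (x : 'rV[R]_nx) (r : 'rV[R]_nr)
  (xi : nat -> 'rV[R]_nx) (mu : nat -> 'rV[R]_nu) : Prop :=
  xi 0%N = x /\
  (forall i : nat, (i < N)%N ->
     xi i.+1 = f (xi i) (mu i) /\ hx (xi i) <= 0 /\ hu (mu i) <= 0) /\
  T (xi N, r).

Definition ocp_cost {R : realType} {nx nu nr : nat}
  (ell : 'rV[R]_nx -> 'rV[R]_nu -> 'rV[R]_nr -> R)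
  (V : 'rV[R]_nx -> 'rV[R]_nr -> R) (N : nat) (r : 'rV[R]_nr)
  (xi : nat -> 'rV[R]_nx) (mu : nat -> 'rV[R]_nu) : R :=
  V (xi N) r + \sum_(i < N) ell (xi i) (mu i) r.

Definition Gamma {R : realType} {nx nu nr : nat}
  (f : 'rV[R]_nx -> 'rV[R]_nu -> 'rV[R]_nx)
  (hx : 'rV[R]_nx -> R) (hu : 'rV[R]_nu -> R)
  (T : set ('rV[R]_nx * 'rV[R]_nr)) (Re : set 'rV[R]_nr) (N : nat)
  : set ('rV[R]_nx * 'rV[R]_nr) :=
  [set z | hx z.1 <= 0 /\ Re z.2 /\
           exists xi mu, ocp_feasible f hx hu T N z.1 z.2 xi mu].

Definition feasible_path {R : realType} {nx nr : nat}
  (Gam : set ('rV[R]_nx * 'rV[R]_nr)) (Re : set 'rV[R]_nr)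
  (x0 : 'rV[R]_nx) (r : 'rV[R]_nr) (p : R -> 'rV[R]_nr) : Prop :=
  {within [set s : R | 0 <= s <= 1], continuous p} /\
  (forall s : R, 0 <= s <= 1 -> Re (p s)) /\
  Gam (x0, p 0) /\ p 1 = r.

Definition Dset {R : realType} {nx nr : nat}
  (Gam : set ('rV[R]_nx * 'rV[R]_nr)) (Re : set 'rV[R]_nr)
  : set ('rV[R]_nx * 'rV[R]_nr) :=
  [set z | Re z.2 /\ exists p, feasible_path Gam Re z.1 z.2 p].

(* closed-loop PathFG + MPC map on (x, s):
   s+ = g (xi_N^*(x, p s)),  x+ = f x (mu_0^*(x, p s)) *)
Definition cl_step {R : realType} {nx nu nr : nat}
  (f : 'rV[R]_nx -> 'rV[R]_nu -> 'rV[R]_nx)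
  (xis : 'rV[R]_nx -> 'rV[R]_nr -> nat -> 'rV[R]_nx)
  (mus : 'rV[R]_nx -> 'rV[R]_nr -> nat -> 'rV[R]_nu)
  (N : nat) (p : R -> 'rV[R]_nr) (g : 'rV[R]_nx -> R)
  (z : 'rV[R]_nx * R) : 'rV[R]_nx * R :=
  (f z.1 (mus z.1 (p z.2) 0%N), g (xis z.1 (p z.2) N)).

Definition asympt_stable_ROA {R : realType} {nx : nat}
  (F : 'rV[R]_nx * R -> 'rV[R]_nx * R) (xe : 'rV[R]_nx) (se : R)
  (A : set ('rV[R]_nx * R)) : Prop :=
  F (xe, se) = (xe, se) /\
  (forall e : R, 0 < e -> exists2 d : R, 0 < d &
     forall z, A z -> `|z.1 - xe| < d -> `|z.2 - se| < d ->
       forall k : nat, `|(iter k F z).1 - xe| < e /\ `|(iter k F z).2 - se| < e) /\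
  (forall z, A z ->
     ((fun k : nat => (iter k F z).1) @ \oo --> xe) /\
     ((fun k : nat => (iter k F z).2) @ \oo --> se)).

(* Main.v *)
Require Import Defs.
From HB Require Import structures.
From mathcomp Require Import all_boot all_order all_algebra.
From mathcomp Require Import all_classical all_reals all_analysis.
From mathcomp Require Import lra.
Import Order.TTheory GRing.Theory Num.Theory.
Import numFieldNormedType.Exports.
Local Open Scope ring_scope.
Local Open Scope classical_set_scope.

Lemma no_descent (R : realType) (a : nat -> R) (K : nat) (c : R) :
  0 < c -> (forall k, 0 <= a k) -> (forall k, (K <= k)%N -> a k.+1 <= a k - c) -> False.
Proof.
move=> c0 a0 Ha.
have H : forall n, a (K + n)%N <= a K - n%:R * c.
  elim=> [|n IH]; first by rewrite addn0 mul0r subr0.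
  rewrite addnS; apply: le_trans (Ha _ (leq_addr _ _)) _.
  rewrite -nat1r mulrDl mul1r; lra.
have := archi_boundP (divr_ge0 (a0 K) (ltW c0)).
set n := Num.Def.archi_bound _ => Hn.
have := H n; have := a0 (K + n)%N.
rewrite ltr_pdivrMr // in Hn. lra.
Qed.

Lemma within_eps {R : realType} {U V : normedModType R} {A : set U} {f : U -> V} :
  {within A, continuous f} -> forall x, A x -> forall e : R, 0 < e ->
  exists2 d : R, 0 < d & forall y, A y -> `|x - y| < d -> `|f x - f y| < e.
Proof.
move=> cf x Ax e e0.
have := (continuous_subspace_in f) ; rewrite /= => H.
rewrite H in cf.
have /cf : x \in A by rewrite inE.
move=> /cvgrPdist_lt /(_ e e0) => Hn.
have : \forall y \near within A (nbhs x), `|f x - f y| < e.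
  by rewrite (nbhs_subspace_in Ax).
rewrite near_withinE => /nbhs_ballP [d d0 Hd].
exists d => // y Ay xy; apply: (Hd y) => //.
by rewrite -ball_normE /ball_ /=.
Qed.

Lemma interior_ball {R : realType} {U V : normedModType R} {T : set (U * V)} a b :
  interior T (a, b) -> exists2 r : R, 0 < r &
    forall y z, `|y - a| < r -> `|z - b| < r -> T (y, z).
Proof.
rewrite /interior /= => /nbhs_ballP [d d0 Hd].
exists d => // y z ya zb; apply: Hd.
rewrite /ball /= /prod_ball /=. split.
  by rewrite -ball_normE /ball_ /= distrC.
by rewrite -ball_normE /ball_ /= distrC.
Qed.

Fixpoint extX {A B : Type} (f : A -> B -> A) (k : A -> B) (xi : nat -> A) (N : nat) (n : nat) : A :=
  match n with
  | 0 => xi 0%N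
  | m.+1 => if (m < N)%N then xi m.+1 else f (extX f k xi N m) (k (extX f k xi N m))
  end.

Lemma term_le_sum {R : realType} {n : nat} (F : 'I_n -> R) (i : 'I_n) :
  (forall j, 0 <= F j) -> F i <= \sum_(j < n) F j.
Proof.
move=> F0; rewrite (bigD1 i) //= lerDl; apply: sumr_ge0 => j _; exact: F0.
Qed.


Ltac clear_nonarith :=
  repeat match goal with
  | H : ?T |- _ =>
    lazymatch T with
    | is_true (@Order.le _ _ _ _) => fail
    | is_true (@Order.lt _ _ _ _) => fail
    | _ = _ => fail
    | _ => clear H
    end
  end.
Ltac lra' := clear_nonarith; lra.
Theorem theorem2 (R : realType) (nx nu nr : nat)
  (f : 'rV[R]_nx -> 'rV[R]_nu -> 'rV[R]_nx)
  (hx : 'rV[R]_nx -> R) (hu : 'rV[R]_nu -> R)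
  (Rset : set 'rV[R]_nr)
  (xbar : 'rV[R]_nr -> 'rV[R]_nx) (ubar : 'rV[R]_nr -> 'rV[R]_nu)
  (eps : R) (N : nat)
  (ell : 'rV[R]_nx -> 'rV[R]_nu -> 'rV[R]_nr -> R)
  (T : set ('rV[R]_nx * 'rV[R]_nr))
  (V : 'rV[R]_nx -> 'rV[R]_nr -> R)
  (kappaT : 'rV[R]_nx -> 'rV[R]_nr -> 'rV[R]_nu)
  (gamma : R -> R)
  (xis : 'rV[R]_nx -> 'rV[R]_nr -> nat -> 'rV[R]_nx)
  (mus : 'rV[R]_nx -> 'rV[R]_nr -> nat -> 'rV[R]_nu)
  (planner : 'rV[R]_nx -> 'rV[R]_nr -> R -> 'rV[R]_nr)
  (g : 'rV[R]_nx -> R)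
  (r : 'rV[R]_nr) (x0 : 'rV[R]_nx)
  (* (A1) *)
  (Hf : loc_lipschitz2 f)
  (Hhx : continuous hx) (Hhu : continuous hu)
  (Hxbar : {within Rset, continuous xbar})
  (Hubar : {within Rset, continuous ubar})
  (HxbarX : forall r', Rset r' -> hx (xbar r') <= 0)
  (HubarU : forall r', Rset r' -> hu (ubar r') <= 0)
  (Heq : forall r', Rset r' -> xbar r' = f (xbar r') (ubar r'))
  (Heps : 0 < eps)
  (* MPC data *)
  (HN : (0 < N)%N)
  (Hell0 : forall x u r', hx x <= 0 -> hu u <= 0 ->
     Reps Rset xbar ubar hx hu eps r' -> 0 <= ell x u r')
  (HT : forall z, T z -> hx z.1 <= 0 /\ Rset z.2)
  (* zeta^* : the minimizer, as a function on Gamma *)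
  (Hzeta : forall x r',
     Gamma f hx hu T (Reps Rset xbar ubar hx hu eps) N (x, r') ->
     ocp_feasible f hx hu T N x r' (xis x r') (mus x r') /\
     forall xi mu, ocp_feasible f hx hu T N x r' xi mu ->
       ocp_cost ell V N r' (xis x r') (mus x r') <= ocp_cost ell V N r' xi mu)
  (* (A2)(a) *)
  (Hell_uc : unif_cont3 ell (fun x u r' => hx x <= 0 /\ hu u <= 0 /\
                               Reps Rset xbar ubar hx hu eps r'))
  (Hell_eq : forall r', Reps Rset xbar ubar hx hu eps r' ->
     ell (xbar r') (ubar r') r' = 0)
  (Hgamma : Kinf gamma)
  (Hell_lb : forall x r' u,
     Gamma f hx hu T (Reps Rset xbar ubar hx hu eps) N (x, r') -> hu u <= 0 ->
     gamma `|x - xbar r'| <= ell x u r')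
  (* (A2)(b) *)
  (HV_uc : unif_cont2 V T)
  (HV_eq : forall r', Reps Rset xbar ubar hx hu eps r' -> V (xbar r') r' = 0)
  (HV0 : forall x r', T (x, r') -> 0 <= V x r')
  (HV_dec : forall x r', T (x, r') ->
     V (f x (kappaT x r')) r' - V x r' <= - ell x (kappaT x r') r')
  (* (A2)(c) *)
  (HT_inv : forall x r', T (x, r') ->
     T (f x (kappaT x r'), r') /\ hx x <= 0 /\ hu (kappaT x r') <= 0)
  (* (A2)(d) *)
  (HT_int : forall r', Reps Rset xbar ubar hx hu eps r' ->
     interior T (xbar r', r'))
  (* (A2)(e) *)
  (Hzeta_lip : exists L : R, forall x1 r1 x2 r2,
     Gamma f hx hu T (Reps Rset xbar ubar hx hu eps) N (x1, r1) ->
     Gamma f hx hu T (Reps Rset xbar ubar hx hu eps) N (x2, r2) ->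
     \sum_(i < N.+1) `|xis x1 r1 i - xis x2 r2 i|
       + \sum_(i < N) `|mus x1 r1 i - mus x2 r2 i|
       <= L * (`|x1 - x2| + `|r1 - r2|))
  (* (A3) *)
  (Hplanner : forall x' r',
     Dset (Gamma f hx hu T (Reps Rset xbar ubar hx hu eps) N)
          (Reps Rset xbar ubar hx hu eps) (x', r') ->
     feasible_path (Gamma f hx hu T (Reps Rset xbar ubar hx hu eps) N)
          (Reps Rset xbar ubar hx hu eps) x' r' (planner x' r'))
  (* r in R_eps and the path p = planner x0 r returned by the planner *)
  (Hr : Reps Rset xbar ubar hx hu eps r)
  (HD0 : Dset (Gamma f hx hu T (Reps Rset xbar ubar hx hu eps) N)
          (Reps Rset xbar ubar hx hu eps) (x0, r))
  (* g is the Path Feasibility Governor map g(xi) = max{s in [0,1] | (xi, p s) in T} *)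
  (Hg : forall xi : 'rV[R]_nx,
     (exists s : R, 0 <= s <= 1 /\ T (xi, planner x0 r s)) ->
     (0 <= g xi <= 1 /\ T (xi, planner x0 r (g xi)) /\
      forall s : R, 0 <= s <= 1 -> T (xi, planner x0 r s) -> s <= g xi)) :
  asympt_stable_ROA
    (cl_step f xis mus N (planner x0 r) g) (xbar r) 1
    [set z | Dset (Gamma f hx hu T (Reps Rset xbar ubar hx hu eps) N)
                  (Reps Rset xbar ubar hx hu eps) (z.1, r) /\
             0 <= z.2 <= 1 /\
             Gamma f hx hu T (Reps Rset xbar ubar hx hu eps) N
                   (z.1, planner x0 r z.2)].
Proof.
set Re := Reps Rset xbar ubar hx hu eps in Hell0 Hzeta Hell_uc Hell_eq Hell_lb HV_eq HT_int Hzeta_lip Hplanner Hr HD0 *.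
set Gam := Gamma f hx hu T Re N in Hzeta Hell_lb Hzeta_lip Hplanner HD0 *.
set p := planner x0 r in Hg *.
have [pcont [pRe [pG0 p1]]] : feasible_path Gam Re x0 r p := Hplanner x0 r HD0.
set F := cl_step f xis mus N p g.
have [n Hn] : exists n, N = n.+1 by exists N.-1; rewrite prednK.
subst N.
pose J x r' := ocp_cost ell V n.+1 r' (xis x r') (mus x r').
have [g0 [_ [ginc _]]] := Hgamma.
have gmono : forall a b, 0 <= a -> a <= b -> gamma a <= gamma b.
  move=> a b a0; rewrite le_eqVlt => /orP [/eqP -> //| ab]; exact/ltW/ginc.
have gpos : forall a, 0 < a -> 0 < gamma a.
  by move=> a a0; rewrite -g0; apply: ginc.
have Hinf : forall r'' (X : nat -> 'rV_nx) (U : nat -> 'rV_nu), Re r'' ->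
    (forall i, X i.+1 = f (X i) (U i) /\ hx (X i) <= 0 /\ hu (U i) <= 0) ->
    (forall i, (n.+1 <= i)%N -> T (X i, r'')) ->
    forall j, Gam (X j, r'') /\
      ocp_feasible f hx hu T n.+1 (X j) r'' (fun i => X (j + i)%N) (fun i => U (j + i)%N).
  move=> r'' X U Rr HX HT' j.
  have Fe : ocp_feasible f hx hu T n.+1 (X j) r'' (fun i => X (j + i)%N) (fun i => U (j + i)%N).
    split; first by rewrite addn0.
    split; last by apply: HT'; rewrite leq_addl.
    by move=> i _; rewrite addnS; exact: HX.
  split => //; split; first exact: (HX j).2.1.
  by split => //; do 2 eexists; exact: Fe.
have Hext : forall x r' r'' xi mu, ocp_feasible f hx hu T n.+1 x r' xi mu ->
    T (xi n.+1, r'') -> exists X U,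
    [/\ (forall i, (i <= n.+1)%N -> X i = xi i), (forall i, (i < n.+1)%N -> U i = mu i),
        U n.+1 = kappaT (xi n.+1) r'',
        (forall i, X i.+1 = f (X i) (U i) /\ hx (X i) <= 0 /\ hu (U i) <= 0) &
        (forall i, (n.+1 <= i)%N -> T (X i, r''))].
  move=> x r' r'' xi mu [xi0 [Hdyn HTN]] HTN'.
  pose k := fun y => kappaT y r''.
  pose X := extX f k xi n.+1.
  pose U := fun i => if (i < n.+1)%N then mu i else k (X i).
  have HX : forall i, (i <= n.+1)%N -> X i = xi i.
    elim=> [|i IH] // iN; by rewrite /X /= iN.
  have HTX : forall j, T (X (n.+1 + j)%N, r'').
    elim=> [|j IH]; first by rewrite addn0 HX.
    rewrite addnS /X /= ltnNge leq_addr /= -/X.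
    exact: (HT_inv _ _ IH).1.
  have HTX' : forall i, (n.+1 <= i)%N -> T (X i, r'').
    by move=> i /subnKC <-; apply: HTX.
  exists X, U; split => //.
  - by move=> i iN; rewrite /U iN.
  - by rewrite /U ltnn HX.
  move=> i; case: (ltnP i n.+1) => iN.
  + have [H1 [H2 H3]] := Hdyn i iN.
    by rewrite /U iN /X /= iN -/X HX ?(ltnW iN).
  + have := HT_inv _ _ (HTX' i iN) => [[H1 [H2 H3]]].
    by rewrite /U ltnNge iN /X /= ltnNge iN.
have Hcost0 : forall x r' xi mu, Re r' -> ocp_feasible f hx hu T n.+1 x r' xi mu ->
    forall i, (i < n.+1)%N -> 0 <= ell (xi i) (mu i) r'.
  move=> x r' xi mu Rr [_ [Hdyn _]] i iN.
  by have [_ [H1 H2]] := Hdyn i iN; apply: Hell0.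
have HJ : forall x r', Gam (x, r') ->
  [/\ ocp_feasible f hx hu T n.+1 x r' (xis x r') (mus x r'),
      0 <= ell x (mus x r' 0%N) r', ell x (mus x r' 0%N) r' <= J x r' &
      gamma `|x - xbar r'| <= ell x (mus x r' 0%N) r'].
  move=> x r' G; have [Fe _] := Hzeta x r' G.
  have [hxx [Rr _]] := G.
  have Fe' := Fe.
  have [xi0 [Hdyn HTN]] := Fe'.
  have [_ [_ hu0]] := Hdyn 0%N isT.
  have l0 : 0 <= ell x (mus x r' 0%N) r'.
    by have := Hcost0 _ _ _ _ Rr Fe 0%N isT; rewrite xi0.
  split => //; last by apply: Hell_lb.
  rewrite /J /ocp_cost big_ord_recl /=.
  set S := \sum_(i < n) _.
  have S0 : 0 <= S.
    by apply: sumr_ge0 => i _; apply: (Hcost0 _ _ _ _ Rr Fe); rewrite /bump /= add1n ltnS.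
  have V0 := HV0 _ _ HTN.
  rewrite xi0; lra'.
have [L [L0 HL]] : exists L : R, 0 < L /\ forall x1 r1 x2 r2, Gam (x1, r1) -> Gam (x2, r2) ->
    (forall i, (i <= n.+1)%N -> `|xis x1 r1 i - xis x2 r2 i| <= L * (`|x1 - x2| + `|r1 - r2|)) /\
    (forall i, (i < n.+1)%N -> `|mus x1 r1 i - mus x2 r2 i| <= L * (`|x1 - x2| + `|r1 - r2|)).
  have [L HL] := Hzeta_lip.
  exists (`|L| + 1); split; first by have := normr_ge0 L; lra'.
  move=> x1 r1 x2 r2 G1 G2; have H := HL _ _ _ _ G1 G2.
  have dd : 0 <= `|x1 - x2| + `|r1 - r2| by rewrite addr_ge0.
  have HB : L * (`|x1 - x2| + `|r1 - r2|) <= (`|L| + 1) * (`|x1 - x2| + `|r1 - r2|).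
    by rewrite ler_wpM2r //; have := ler_norm L; lra'.
  have S1 : 0 <= \sum_(i < n.+1) `|mus x1 r1 i - mus x2 r2 i|.
    by apply: sumr_ge0 => i _.
  have S2 : 0 <= \sum_(i < n.+2) `|xis x1 r1 i - xis x2 r2 i|.
    by apply: sumr_ge0 => i _.
  split => i iN.
  - have := term_le_sum (fun j : 'I_n.+2 => `|xis x1 r1 j - xis x2 r2 j|)
       (Ordinal (iN : (i < n.+2)%N)) (fun _ => normr_ge0 _).
    rewrite /=; lra'.
  - have := term_le_sum (fun j : 'I_n.+1 => `|mus x1 r1 j - mus x2 r2 j|)
       (Ordinal iN) (fun _ => normr_ge0 _).
    rewrite /=; lra'.
have Heqp : forall r', Re r' ->
   [/\ Gam (xbar r', r'), (forall i, (i <= n.+1)%N -> xis (xbar r') r' i = xbar r'),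
       (forall i, (i < n.+1)%N -> ell (xis (xbar r') r' i) (mus (xbar r') r' i) r' = 0) &
       V (xis (xbar r') r' n.+1) r' = 0].
  move=> r' Rr; have Rr' := Rr; have [Rs [hxb hub]] := Rr'.
  have Tb : T (xbar r', r') := interior_subset (HT_int r' Rr).
  have Fc : ocp_feasible f hx hu T n.+1 (xbar r') r' (fun _ => xbar r') (fun _ => ubar r').
    split => //; split => // i _; split; [exact: Heq | split; lra].
  have G : Gam (xbar r', r').
    split; first lra'.
    by split => //; do 2 eexists; exact: Fc.
  have [Fe Hmin] := Hzeta _ _ G.
  have Jle := Hmin _ _ Fc.
  have C0 : ocp_cost ell V n.+1 r' (fun _ => xbar r') (fun _ => ubar r') = 0.
    by rewrite /ocp_cost (HV_eq _ Rr) big1 ?addr0 // => i _; exact: Hell_eq.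
  rewrite C0 /ocp_cost in Jle.
  have Fe' := Fe; have [xi0 [Hdyn HTN]] := Fe'.
  have V0 := HV0 _ _ HTN.
  have Sge : forall i : 'I_n.+1, true -> 0 <= ell (xis (xbar r') r' i) (mus (xbar r') r' i) r'.
    by move=> i _; apply: (Hcost0 _ _ _ _ Rr Fe).
  have S0 : 0 <= \sum_(i < n.+1) ell (xis (xbar r') r' i) (mus (xbar r') r' i) r'.
    by apply: sumr_ge0.
  have Vz : V (xis (xbar r') r' n.+1) r' = 0 by lra'.
  have Sz : \sum_(i < n.+1) ell (xis (xbar r') r' i) (mus (xbar r') r' i) r' = 0 by lra'.
  have lz : forall i, (i < n.+1)%N -> ell (xis (xbar r') r' i) (mus (xbar r') r' i) r' = 0.
    by move=> i iN; exact: (psumr_eq0P Sge Sz (i := Ordinal iN)).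
  split => // i iN.
  have [X [U [HX HU HUN Hdyn' HT']]] := Hext _ _ r' _ _ Fe HTN.
  have [Gi _] := Hinf r' X U Rr Hdyn' HT' i.
  rewrite HX // in Gi.
  have [u [hu0 lu]] : exists u, hu u <= 0 /\ ell (xis (xbar r') r' i) u r' <= 0.
    case: (ltnP i n.+1) => iN'.
    - exists (mus (xbar r') r' i); split; first exact: (Hdyn i iN').2.2.
      by rewrite lz.
    - have -> : i = n.+1 by apply/eqP; rewrite eqn_leq iN iN'.
      exists (kappaT (xis (xbar r') r' n.+1) r').
      have [T1 [_ hk]] := HT_inv _ _ HTN.
      split => //; have := HV_dec _ _ HTN; have := HV0 _ _ T1; rewrite Vz; lra'.
  have gl := Hell_lb _ _ u Gi hu0.
  apply/eqP; rewrite -subr_eq0 -normr_eq0 eq_le normr_ge0 andbT leNgt.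
  by apply/negP => /gpos; lra'.
have Hstep : forall x s, 0 <= s <= 1 -> Gam (x, p s) ->
  [/\ 0 <= (F (x, s)).2 <= 1, Gam ((F (x, s)).1, p (F (x, s)).2), s <= (F (x, s)).2,
      (F (x, s)).1 = xis x (p s) 1%N &
      (      (forall sg, 0 <= sg <= 1 -> T (xis x (p s) n.+1, p sg) -> sg <= (F (x, s)).2) /\
      forall eta, 0 <= eta ->
        (forall y u, hx y <= 0 -> hu u <= 0 -> ell y u (p (F (x, s)).2) - ell y u (p s) <= eta) ->
        (forall y, T (y, p s) -> T (y, p (F (x, s)).2) -> V y (p (F (x, s)).2) - V y (p s) <= eta) ->
        J (F (x, s)).1 (p (F (x, s)).2) <= J x (p s) - ell x (mus x (p s) 0%N) (p s) + n.+1%:R * eta)].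
  move=> x s s01 G.
  have [Fe _] := Hzeta _ _ G.
  have Fe' := Fe; have [xi0 [Hdyn HTN]] := Fe'.
  have [g01 [gT gmax]] := Hg (xis x (p s) n.+1) (ex_intro _ s (conj s01 HTN)).
  rewrite /F /cl_step /=.
  set s' := g (xis x (p s) n.+1).
  have x1 : f x (mus x (p s) 0%N) = xis x (p s) 1%N by rewrite (Hdyn 0%N isT).1 xi0.
  rewrite x1.
  have Rs' : Re (p s') := pRe s' g01.
  have [X [U [HX HU HUN Hdyn' HT']]] := Hext _ _ (p s') _ _ Fe gT.
  have [G1 Fe1] := Hinf _ X U Rs' Hdyn' HT' 1%N.
  rewrite HX // in G1; rewrite HX // in Fe1.
  have ss' : s <= s' := gmax s s01 HTN.
  split => //; split; first exact: gmax.
  move=> eta eta0 Hl HV.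
  have [_ Hmin1] := Hzeta _ _ G1.
  have Jle := Hmin1 _ _ Fe1.
  rewrite /J; rewrite /ocp_cost [Z in _ <= _ + Z]big_ord_recr /= in Jle.
  have e1 : X (1 + n)%N = xis x (p s) n.+1 by rewrite add1n HX.
  have e2 : U (1 + n)%N = kappaT (xis x (p s) n.+1) (p s') by rewrite add1n HUN.
  have e3 : X (1 + n.+1)%N = f (xis x (p s) n.+1) (kappaT (xis x (p s) n.+1) (p s')).
    by rewrite addnS (Hdyn' (1 + n)%N).1 e1 e2.
  rewrite e3 e1 e2 in Jle.
  have Hd := HV_dec _ _ gT.
  have Hv := HV _ HTN gT.
  set S1 := \sum_(i < n) _ in Jle.
  rewrite /ocp_cost [in Z in _ <= Z]big_ord_recl /=.
  set S2 := (\sum_(i < n) ell (xis x (p s) _) _ _).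
  have HS : S1 <= S2 + n%:R * eta.
    have -> : n%:R * eta = \sum_(i < n) eta by rewrite sumr_const card_ord mulr_natl.
    rewrite -big_split /=; apply: ler_sum => i _.
    have i1 : (1 + i <= n.+1)%N by rewrite add1n ltnS ltnW.
    have i2 : (1 + i < n.+1)%N by rewrite add1n ltnS.
    rewrite /= HX // HU //.
    have [_ [h1 h2]] := Hdyn _ i2.
    have := Hl _ _ h1 h2; rewrite /bump /=; lra'.
  have En : n.+1%:R * eta = n%:R * eta + eta by rewrite -[n.+1]addn1 natrD mulrDl mul1r.
  rewrite xi0 En; lra'.
have JC : forall r', Re r' -> forall e, 0 < e -> exists2 d, 0 < d &
    forall x, Gam (x, r') -> `|x - xbar r'| < d -> J x r' < e.
  move=> r' Rr e e0.
  have [Gb Hxb Hlz HVz] := Heqp r' Rr.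
  pose eta := e / n.+2%:R.
  have eta0 : 0 < eta by rewrite divr_gt0 // ltr0n.
  have [dl dl0 Hdl] := Hell_uc eta eta0.
  have [dv dv0 Hdv] := HV_uc eta eta0.
  exists (Num.min dl dv / L); first by rewrite divr_gt0 // lt_min dl0 dv0.
  move=> x G xd.
  have [Hx Hm] := HL _ _ _ _ G Gb.
  rewrite ltr_pdivlMr // mulrC lt_min in xd; case/andP: xd => xl xv.
  have [Fe _] := Hzeta _ _ G.
  have Fe' := Fe; have [xi0 [Hdyn HTN]] := Fe'.
  have [Fb _] := Hzeta _ _ Gb.
  have [_ [Hdynb HTNb]] := Fb.
  have rr : `|r' - r'| = 0 by rewrite subrr normr0.
  have Hterm : forall i, (i < n.+1)%N -> ell (xis x r' i) (mus x r' i) r' <= eta.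
    move=> i iN.
    have [_ [h1 h2]] := Hdyn i iN.
    have [_ [h1b h2b]] := Hdynb i iN.
    have hxi := Hx i (ltnW iN); have hmi := Hm i iN.
    rewrite rr addr0 in hxi hmi.
    have := Hdl (xis x r' i) (mus x r' i) r' (xis (xbar r') r' i) (mus (xbar r') r' i) r'
      (conj h1 (conj h2 Rr)) (conj h1b (conj h2b Rr)).
    rewrite rr (Hlz i iN) subr0 => H.
    have := H (le_lt_trans hxi xl) (le_lt_trans hmi xl) dl0.
    by have := ler_norm (ell (xis x r' i) (mus x r' i) r'); lra'.
  have HVt : V (xis x r' n.+1) r' < eta.
    have hxi := Hx n.+1 (leqnn _); rewrite rr addr0 in hxi.
    have := Hdv (xis x r' n.+1) r' (xis (xbar r') r' n.+1) r' HTN HTNb.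
    rewrite rr HVz subr0 => H.
    have := H (le_lt_trans hxi xv) dv0.
    by have := ler_norm (V (xis x r' n.+1) r'); lra'.
  have HS : \sum_(i < n.+1) ell (xis x r' i) (mus x r' i) r' <= n.+1%:R * eta.
    have -> : n.+1%:R * eta = \sum_(i < n.+1) eta by rewrite sumr_const card_ord mulr_natl.
    by apply: ler_sum => i _; apply: Hterm.
  have Ee : e = n.+1%:R * eta + eta.
    have -> : n.+1%:R * eta + eta = n.+2%:R * eta.
      by rewrite -[n.+2]addn1 natrD mulrDl mul1r.
    by rewrite /eta mulrC divfK // pnatr_eq0.
  rewrite /J /ocp_cost Ee; lra'.
have PC : forall sg, 0 <= sg <= 1 -> forall eta, 0 < eta -> exists2 th, 0 < th &
    forall s, 0 <= s <= 1 -> `|s - sg| < th ->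
      `|p s - p sg| < eta /\ `|xbar (p s) - xbar (p sg)| < eta.
  move=> sg sg01 eta eta0.
  have [Rs _] := pRe sg sg01.
  have [dx dx0 Hdx] := within_eps Hxbar _ Rs _ eta0.
  have m0 : 0 < Num.min eta dx by rewrite lt_min eta0 dx0.
  have [t1 t10 Ht1] := within_eps pcont _ sg01 _ m0.
  exists t1 => // s s01 ss.
  rewrite distrC in ss.
  have := Ht1 s s01 ss; rewrite lt_min => /andP [h1 h2].
  split; first by rewrite distrC.
  have := Hdx (p s) (pRe s s01).1 h2.
  by rewrite distrC.
have Inv : forall z, 0 <= z.2 <= 1 -> Gam (z.1, p z.2) ->
    forall k, 0 <= (iter k F z).2 <= 1 /\ Gam ((iter k F z).1, p (iter k F z).2).
  move=> z z01 Gz; elim=> [|k [IH1 IH2]] //=.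
  move: IH1 IH2; case: (iter k F z) => a b /= IH1 IH2.
  by have [H1 H2 _ _ _] := Hstep a b IH1 IH2.
have Mono : forall z, 0 <= z.2 <= 1 -> Gam (z.1, p z.2) ->
    forall k j, (k <= j)%N -> (iter k F z).2 <= (iter j F z).2.
  move=> z z01 Gz k j /subnKC <-.
  elim: (j - k)%N => [|d IH]; first by rewrite addn0.
  rewrite addnS /=; apply: (le_trans IH).
  have [a1 a2] := Inv z z01 Gz (k + d)%N.
  move: a1 a2; case: (iter (k + d) F z) => a b /= a1 a2.
  by have [_ _ H _ _] := Hstep a b a1 a2.
have [Gr Hxr Hlr HVr] := Heqp r Hr.
have EQ : F (xbar r, 1) = (xbar r, 1).
  rewrite /F /cl_step /= p1.
  have [Fe _] := Hzeta _ _ Gr.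
  have [xi0 [Hdyn HTN]] := Fe.
  have E1 : f (xbar r) (mus (xbar r) r 0%N) = xbar r.
    by have := (Hdyn 0%N isT).1; rewrite (Hxr 1%N) // (Hxr 0%N) // => <-.
  have T1 : 0 <= (1 : R) <= 1 /\ T (xis (xbar r) r n.+1, p 1) by rewrite p1 ler01 lexx.
  have [g01 [_ gmax]] := Hg _ (ex_intro _ 1 T1).
  have := gmax 1 T1.1 T1.2; move: g01 => /andP [_ g1] g2.
  by rewrite E1; congr pair; apply/le_anti; rewrite g1 g2.
have Ez : forall z k, iter k.+1 F z = F ((iter k F z).1, (iter k F z).2).
  by move=> z k; rewrite /= -surjective_pairing.
have After1 : forall z, 0 <= z.2 <= 1 -> Gam (z.1, p z.2) -> forall k0, (iter k0 F z).2 = 1 ->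
    forall k, (k0 <= k)%N -> [/\ (iter k F z).2 = 1,
      gamma `|(iter k F z).1 - xbar r| <= J (iter k F z).1 r &
      J (iter k.+1 F z).1 r <= J (iter k F z).1 r - gamma `|(iter k F z).1 - xbar r|].
  move=> z z01 Gz k0 Hk0 k k0k.
  have [i1 i2] := Inv z z01 Gz k.
  have Es : (iter k F z).2 = 1.
    apply/le_anti; case/andP: i1 => _ ->; rewrite -Hk0; exact: Mono.
  have [i1' i2'] := Inv z z01 Gz k.+1.
  have Es' : (iter k.+1 F z).2 = 1.
    apply/le_anti; case/andP: i1' => _ ->; rewrite -Hk0; apply: Mono => //; exact: leqW.
  set x := (iter k F z).1.
  have Hk1 : iter k.+1 F z = F (x, 1) by rewrite Ez Es.
  rewrite Hk1 in Es'; rewrite Hk1.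
  rewrite Es in i2.
  have o1 : 0 <= (1:R) <= 1 by rewrite ler01 lexx.
  have [_ _ _ _ [_ Hc]] := Hstep _ _ o1 i2.
  rewrite Es' in Hc.
  rewrite p1 in i2.
  have [_ l0 lJ lg] := HJ _ _ i2.
  split => //; first lra'.
  have := Hc 0 (lexx 0) (fun y u _ _ => ltac:(by rewrite subrr)) (fun y _ _ => ltac:(by rewrite subrr)).
  rewrite mulr0 addr0 p1; lra'.
have minl : forall a b : R, Num.min a b <= a by move=> a b; rewrite ge_min lexx.
have minr : forall a b : R, Num.min a b <= b by move=> a b; rewrite ge_min lexx orbT.
have ClaimA : forall z, 0 <= z.2 <= 1 -> Gam (z.1, p z.2) -> exists k, (iter k F z).2 = 1.
  move=> z z01 Gz.
  case: (pselect (exists k, (iter k F z).2 = 1)) => // Hne; exfalso.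
  have Hlt : forall k, (iter k F z).2 < 1.
    move=> k; have [/andP [_ h] _] := Inv z z01 Gz k.
    rewrite lt_neqAle h andbT; apply/eqP => E; apply: Hne; by exists k.
  pose S := [set (iter k F z).2 | k in [set: nat]].
  have S0 : S z.2 by exists 0%N.
  have Sub : ubound S 1.
    by move=> y [k _ <-]; have [/andP [_ h] _] := Inv z z01 Gz k.
  have hS : has_sup S by split; [exists z.2 | exists 1].
  set ss := sup S.
  have ub : forall k, (iter k F z).2 <= ss.
    by move=> k; apply: (ub_le_sup hS.2); exists k.
  have ss01 : 0 <= ss <= 1.
    apply/andP; split; first by case/andP: z01 => h _; apply: le_trans h (ub 0%N).
    by apply: ge_sup; [exists z.2 | ].
  have Rss := pRe ss ss01.
  have [rho rho0 Hrho] := interior_ball _ _ (HT_int _ Rss).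
  have rho2 : 0 < rho / 2 by rewrite divr_gt0.
  have [th1 th10 Hth1] := PC ss ss01 _ rho2.
  pose c := rho / 2 / L.
  have c0 : 0 < c by rewrite divr_gt0.
  have Lc : L * c = rho / 2 by rewrite /c mulrC divfK // gt_eqF.
  pose m := gamma c.
  have m0 : 0 < m := gpos c c0.
  pose eta := m / 2 / n.+1%:R.
  have eta0 : 0 < eta by rewrite divr_gt0 // ?divr_gt0 // ltr0n.
  have Neta : n.+1%:R * eta = m / 2 by rewrite /eta mulrC divfK // pnatr_eq0.
  have [dl dl0 Hdl] := Hell_uc eta eta0.
  have [dv dv0 Hdv] := HV_uc eta eta0.
  pose dd := Num.min dl dv.
  have dd0 : 0 < dd / 2 by rewrite divr_gt0 // lt_min dl0 dv0.
  have [th2 th20 Hth2] := PC ss ss01 _ dd0.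
  pose th := Num.min th1 th2.
  have th0 : 0 < th by rewrite lt_min th10 th20.
  have [e [K _ <-] HK] := sup_adherent th0 hS.
  rewrite -/ss in HK.
  have nearK : forall k, (K <= k)%N -> 0 <= (iter k F z).2 <= 1 /\ `|(iter k F z).2 - ss| < th.
    move=> k Kk; have [i1 _] := Inv z z01 Gz k; split => //.
    have := Mono z z01 Gz K k Kk; have := ub k.
    move=> h1 h2; rewrite distrC ger0_norm ?subr_ge0 //; lra'.
  have Key : forall k, (K <= k)%N -> c <= `|(iter k F z).1 - xbar (p (iter k F z).2)|.
    move=> k Kk; rewrite leNgt; apply/negP => xc.
    have [i1 i2] := Inv z z01 Gz k.
    have [sk01 skn] := nearK k Kk.
    have [_ _ _ _ [Hmax _]] := Hstep _ _ i1 i2.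
    rewrite -Ez in Hmax.
    have Hk1 := Hlt k.+1; have ub1 := ub k.+1.
    move: Hmax xc i2 sk01 skn.
    set x := (iter k F z).1; set s := (iter k F z).2 => Hmax xc i2 sk01 skn.
    have Rs := pRe s sk01.
    have [Gb Hxb _ _] := Heqp _ Rs.
    have [HLx _] := HL _ _ _ _ i2 Gb.
    have := HLx n.+1 (leqnn _); rewrite Hxb // subrr normr0 addr0 => HLn.
    have [_ Hx2] := Hth1 s sk01 (lt_le_trans skn (minl _ _)).
    have HLc : L * `|x - xbar (p s)| < rho / 2 by rewrite -Lc ltr_pM2l.
    have xiN : `|xis x (p s) n.+1 - xbar (p ss)| < rho.
      have := ler_distD (xbar (p s)) (xis x (p s) n.+1) (xbar (p ss)); lra'.
    pose s' := Num.min 1 (ss + th / 2).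
    have th2p : 0 < th / 2 by rewrite divr_gt0.
    have s'ss : ss <= s' by rewrite le_min; case/andP: ss01 => _ ->; rewrite lerDl ltW.
    have s'1 : s' <= 1 by apply: minl.
    have s'th : s' <= ss + th / 2 by apply: minr.
    have s'01 : 0 <= s' <= 1.
      by case/andP: ss01 => h _; rewrite s'1 andbT; apply: le_trans h s'ss.
    have s'd : `|s' - ss| < th1.
      rewrite ger0_norm ?subr_ge0 //; have := minl th1 th2; rewrite -/th; lra'.
    have [Hp' _] := Hth1 s' s'01 s'd.
    have Ts' : T (xis x (p s) n.+1, p s') by apply: Hrho => //; lra'.
    have := Hmax s' s'01 Ts'.
    rewrite ge_min => /orP [h | h]; lra'.
  apply: (@no_descent R (fun k => J (iter k F z).1 (p (iter k F z).2)) K (m / 2)).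
  - by rewrite divr_gt0.
  - move=> k; have [_ i2] := Inv z z01 Gz k; have [_ l0 lJ _] := HJ _ _ i2; lra'.
  move=> k Kk.
  have [i1 i2] := Inv z z01 Gz k.
  have [sk01 skn] := nearK k Kk.
  have [sk1 skn1] := nearK k.+1 (leqW Kk).
  have [_ _ _ _ [_ Hc]] := Hstep _ _ i1 i2.
  rewrite -Ez in Hc.
  have Kc := Key k Kk.
  have [_ _ _ lg] := HJ _ _ i2.
  move: Hc sk01 skn sk1 skn1 Kc lg.
  set s := (iter k F z).2; set s1 := (iter k.+1 F z).2 => Hc sk01 skn sk1 skn1 Kc lg.
  have [Ha _] := Hth2 s sk01 (lt_le_trans skn (minr _ _)).
  have [Hb _] := Hth2 s1 sk1 (lt_le_trans skn1 (minr _ _)).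
  have dp : `|p s1 - p s| < dd.
    have := ler_distD (p ss) (p s1) (p s); rewrite (distrC (p ss)); lra'.
  have dpl : `|p s1 - p s| < dl by apply: lt_le_trans dp (minl _ _).
  have dpv : `|p s1 - p s| < dv by apply: lt_le_trans dp (minr _ _).
  have Hl : forall y u, hx y <= 0 -> hu u <= 0 -> ell y u (p s1) - ell y u (p s) <= eta.
    move=> y u hy hu0.
    have := Hdl y u (p s1) y u (p s) (conj hy (conj hu0 (pRe _ sk1))) (conj hy (conj hu0 (pRe _ sk01))).
    rewrite !subrr !normr0 => H; have := H dl0 dl0 dpl.
    have := ler_norm (ell y u (p s1) - ell y u (p s)); lra'.
  have Hv : forall y, T (y, p s) -> T (y, p s1) -> V y (p s1) - V y (p s) <= eta.
    move=> y T0 T1.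
    have := Hdv y (p s1) y (p s) T1 T0.
    rewrite subrr normr0 => H; have := H dv0 dpv.
    have := ler_norm (V y (p s1) - V y (p s)); lra'.
  have := Hc eta (ltW eta0) Hl Hv; rewrite Neta.
  have := gmono c _ (ltW c0) Kc; rewrite -/m; lra'.
have gge0 : forall a, 0 <= a -> 0 <= gamma a.
  by move=> a a0; rewrite -g0; apply: gmono.
have Jmono : forall z, 0 <= z.2 <= 1 -> Gam (z.1, p z.2) -> forall k0, (iter k0 F z).2 = 1 ->
    forall j k, (k0 <= j)%N -> (j <= k)%N -> J (iter k F z).1 r <= J (iter j F z).1 r.
  move=> z z01 Gz k0 Hk0 j k k0j /subnKC <-.
  elim: (k - j)%N => [|d IH]; first by rewrite addn0.
  rewrite addnS; apply: le_trans _ IH.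
  have [_ h1 h2] := After1 z z01 Gz k0 Hk0 (j + d)%N (leq_trans k0j (leq_addr _ _)).
  have := gge0 `|(iter (j + d) F z).1 - xbar r| (normr_ge0 _); lra'.
have ClaimB : forall z, 0 <= z.2 <= 1 -> Gam (z.1, p z.2) -> forall k0, (iter k0 F z).2 = 1 ->
    forall e, 0 < e -> exists K, forall k, (K <= k)%N -> `|(iter k F z).1 - xbar r| < e.
  move=> z z01 Gz k0 Hk0 e e0.
  have [d1 d10 Hd1] := JC r Hr _ (gpos e e0).
  have [j [k0j xj]] : exists j, (k0 <= j)%N /\ `|(iter j F z).1 - xbar r| < d1.
    case: (pselect (exists j, (k0 <= j)%N /\ `|(iter j F z).1 - xbar r| < d1)) => // Hne.
    exfalso.
    apply: (@no_descent R (fun k => J (iter k F z).1 (p (iter k F z).2)) k0 (gamma d1)).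
    - exact: gpos.
    - move=> k; have [_ i2] := Inv z z01 Gz k; have [_ l0 lJ _] := HJ _ _ i2; lra'.
    move=> k k0k.
    have [Es h1 h2] := After1 z z01 Gz k0 Hk0 k k0k.
    have [Es' _ _] := After1 z z01 Gz k0 Hk0 k.+1 (leqW k0k).
    change (J (iter k.+1 F z).1 (p (iter k.+1 F z).2) <= J (iter k F z).1 (p (iter k F z).2) - gamma d1).
    rewrite Es Es' p1.
    have H : d1 <= `|(iter k F z).1 - xbar r|.
      by rewrite leNgt; apply/negP => H; apply: Hne; exists k.
    have := gmono _ _ (ltW d10) H; lra'.
  exists j => k jk.
  have [Es h1 _] := After1 z z01 Gz k0 Hk0 k (leq_trans k0j jk).
  have [Esj _ _] := After1 z z01 Gz k0 Hk0 j k0j.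
  have [_ i2] := Inv z z01 Gz j; rewrite Esj p1 in i2.
  have := Hd1 _ i2 xj; have := Jmono z z01 Gz k0 Hk0 j k k0j jk.
  move=> h3 h4; rewrite ltNge; apply/negP => H.
  have := gmono _ _ (ltW e0) H; lra'.
have ClaimC : forall e, 0 < e -> exists2 d, 0 < d & forall z, 0 <= z.2 <= 1 -> Gam (z.1, p z.2) ->
    `|z.1 - xbar r| < d -> `|z.2 - 1| < d ->
    forall k, `|(iter k F z).1 - xbar r| < e /\ `|(iter k F z).2 - 1| < e.
  move=> e e0.
  have [d1 d10 Hd1] := JC r Hr _ (gpos e e0).
  have [rho rho0 Hrho] := interior_ball _ _ (HT_int _ Hr).
  pose w := Num.min d1 rho.
  have w0 : 0 < w by rewrite lt_min d10 rho0.
  have L2 : 0 < 2 * (L + 1) by lra'.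
  pose dl := w / (2 * (L + 1)).
  have dl0 : 0 < dl by rewrite divr_gt0.
  have Edl : dl * (2 * (L + 1)) = w by rewrite /dl divfK // gt_eqF.
  have Hdl : 2 * L * dl + dl < w by lra'.
  have o1 : 0 <= (1 : R) <= 1 by rewrite ler01 lexx.
  have [th th0 Hth] := PC 1 o1 dl dl0.
  rewrite p1 in Hth.
  exists (Num.min (Num.min e dl) th); first by rewrite !lt_min e0 dl0 th0.
  move=> z z01 Gz xz sz.
  have xe : `|z.1 - xbar r| < e by apply: lt_le_trans xz (le_trans (minl _ _) (minl _ _)).
  have xdl : `|z.1 - xbar r| < dl by apply: lt_le_trans xz (le_trans (minl _ _) (minr _ _)).
  have sth : `|z.2 - 1| < th by apply: lt_le_trans sz (minr _ _).
  have se : `|z.2 - 1| < e by apply: lt_le_trans sz (le_trans (minl _ _) (minl _ _)).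
  have Sk : forall k, `|(iter k F z).2 - 1| < e.
    move=> k; have [/andP [_ h1] _] := Inv z z01 Gz k.
    have h2 := Mono z z01 Gz 0%N k (leq0n _); rewrite /= in h2.
    have z1 : z.2 <= 1 by case/andP: z01.
    move: se; rewrite distrC ger0_norm ?subr_ge0 // => se'.
    rewrite distrC ger0_norm ?subr_ge0 //; lra'.
  move=> k; split => //.
  case: k => [|k]; first by [].
  have [_ Hxp] := Hth z.2 z01 sth.
  have [_ _ _ Ex1 [Hmax _]] := Hstep _ _ z01 Gz.
  rewrite -surjective_pairing in Ex1 Hmax.
  have Rs := pRe z.2 z01.
  have [Gb Hxb _ _] := Heqp _ Rs.
  have [HLx _] := HL _ _ _ _ Gz Gb.
  have a2 : `|z.1 - xbar (p z.2)| < 2 * dl.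
    have := ler_distD (xbar r) z.1 (xbar (p z.2)); rewrite (distrC (xbar r)); lra'.
  have La : L * `|z.1 - xbar (p z.2)| < L * (2 * dl) by rewrite ltr_pM2l.
  have Hi : forall i, (i <= n.+1)%N -> `|xis z.1 (p z.2) i - xbar r| < w.
    move=> i iN; have := HLx i iN; rewrite Hxb // subrr normr0 addr0 => h.
    have := ler_distD (xbar (p z.2)) (xis z.1 (p z.2) i) (xbar r); lra'.
  have TN : T (xis z.1 (p z.2) n.+1, p 1).
    rewrite p1; apply: Hrho; first exact: lt_le_trans (Hi _ (leqnn _)) (minr _ _).
    by rewrite subrr normr0.
  have S1 : (iter 1 F z).2 = 1.
    apply/le_anti; have [/andP [_ ->] _] := Inv z z01 Gz 1%N; exact: Hmax 1 o1 TN.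
  have [_ G1] := Inv z z01 Gz 1%N.
  rewrite S1 p1 in G1; change (Gam ((F z).1, r)) in G1; rewrite Ex1 in G1.
  have J1 : J (iter 1 F z).1 r < gamma e.
    change (J (F z).1 r < gamma e); rewrite Ex1; apply: (Hd1 _ G1).
    exact: lt_le_trans (Hi 1%N (ltn0Sn n)) (minl _ _).
  have [_ h1 _] := After1 z z01 Gz 1%N S1 k.+1 (ltn0Sn _).
  have := Jmono z z01 Gz 1%N S1 1%N k.+1 (leqnn _) (ltn0Sn _).
  move=> h2; rewrite ltNge; apply/negP => H.
  have := gmono _ _ (ltW e0) H; lra'.
split; first exact: EQ.
split.
  move=> e e0; have [d d0 Hd] := ClaimC e e0; exists d => // z [_ [z01 Gz]]; exact: Hd.
move=> z [_ [z01 Gz]]; have [k0 Hk0] := ClaimA z z01 Gz; split.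
  apply/cvgrPdist_lt => e e0; have [K HK] := ClaimB z z01 Gz k0 Hk0 e e0.
  by exists K => // k /= Kk; rewrite distrC; apply: HK.
apply/cvgrPdist_lt => e e0; exists k0 => // k /= Kk.
by have [Es _ _] := After1 z z01 Gz k0 Hk0 k Kk; rewrite Es subrr normr0.
Qed.
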